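(* Let $d\ge1$ and $\delta\in(0,1]$. For $x\in\mathbb{S}^{d-1}$ let $x'_i=\lfloor x_i\sqrt d/\delta+\tfrac12\rfloor\,\delta/\sqrt d$ for $i=1,\dots,d$, and let $f(x)=x'/\|x'\|_2$. Let $\alpha',\beta'\in[0,1]$ with $\alpha'>\beta'$, and suppose \[ \delta<\frac{\alpha'-\beta'}{\sqrt{2-2\alpha'}+\sqrt{2-2\beta'}} . \] Then there exists $t\in\mathbb{R}$ such that for all $x,y\in\mathbb{S}^{d-1}$: - $\langle x,y\rangle\ge\alpha'$ implies $\langle f(x),f(y)\rangle\ge t$; - $\langle x,y\rangle\le\beta'$ implies $\langle f(x),f(y)\rangle<t$.
   Context: $\mathbb{S}^{d-1}$ denotes the Euclidean unit sphere in $\mathbb{R}^d$. *)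

(* Defs.v *)
(* classical reals. Vectors in R^d are functions nat -> R,
   only coordinates 0..d-1 are used. *)
From Stdlib Require Import Reals Lra.
Open Scope R_scope.

Fixpoint rsum (d : nat) (g : nat -> R) : R :=
  match d with
  | O => 0
  | S k => rsum k g + g k
  end.

Definition dot (d : nat) (x y : nat -> R) : R := rsum d (fun i => x i * y i).

Definition norm2 (d : nat) (x : nat -> R) : R := sqrt (dot d x x).

Definition on_sphere (d : nat) (x : nat -> R) : Prop := dot d x x = 1.

(* floor via Stdlib's Int_part: IZR (Int_part r) <= r < IZR (Int_part r) + 1 *)
Definition rfloor (r : R) : R := IZR (Int_part r).

Definition quant (d : nat) (delta : R) (x : nat -> R) : nat -> R :=
  fun i => rfloor (x i * sqrt (INR d) / delta + / 2) * delta / sqrt (INR d).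

Definition fq (d : nat) (delta : R) (x : nat -> R) : nat -> R :=
  fun i => quant d delta x i / norm2 d (quant d delta x).

(* Main.v *)
Require Import Defs.
From Stdlib Require Import Reals Lra Psatz.
Open Scope R_scope.

Lemma rsum_le (d : nat) (f g : nat -> R) :
  (forall i, (i < d)%nat -> f i <= g i) -> rsum d f <= rsum d g.
Proof.
  induction d; intros H; simpl; [lra|].
  assert (rsum d f <= rsum d g) by (apply IHd; intros; apply H; lia).
  assert (f d <= g d) by (apply H; lia). lra.
Qed.

Lemma rsum_const (d : nat) (c : R) : rsum d (fun _ => c) = INR d * c.
Proof. induction d; cbn [rsum]; [simpl; ring|]. rewrite IHd, S_INR; ring. Qed.



Lemma rsum_sq_nonneg (d : nat) (u : nat -> R) : 0 <= rsum d (fun i => u i * u i).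
Proof.
  induction d; simpl; [lra|]. nra.
Qed.

Lemma dot_sym d u v : dot d u v = dot d v u.
Proof. unfold dot; induction d; simpl; [ring|]. rewrite IHd; ring. Qed.

Lemma dot_exp d u v w p q :
  rsum d (fun i => (u i - p * v i) * (w i - q * v i)) =
  dot d u w - q * dot d u v - p * dot d v w + p * q * dot d v v.
Proof. unfold dot; induction d; simpl; [ring|]. rewrite IHd; ring. Qed.

Lemma dot_scal d u v c c' :
  dot d (fun i => u i / c) (fun i => v i / c') = dot d u v * (/ c * / c').
Proof. unfold dot, Rdiv; induction d; simpl; [ring|]. rewrite IHd; ring. Qed.

Lemma dot_scalr d u v c' :
  dot d u (fun i => v i / c') = dot d u v * / c'.
Proof. unfold dot, Rdiv; induction d; simpl; [ring|]. rewrite IHd; ring. Qed.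

Lemma dot_split d x q :
  dot d q q = dot d x x + 2 * dot d x (fun i => q i - x i)
              + dot d (fun i => q i - x i) (fun i => q i - x i)
  /\ dot d x q = dot d x x + dot d x (fun i => q i - x i).
Proof.
  unfold dot; induction d; simpl; [split; ring|]. destruct IHd as [A B].
  rewrite A, B; split; ring.
Qed.

Lemma CS d u v : (dot d u v)^2 <= dot d u u * dot d v v.
Proof.
  set (A := dot d u u); set (B := dot d v v); set (C := dot d u v).
  assert (Q : forall l, 0 <= A - 2 * l * C + l^2 * B).
  { intros l. assert (H := rsum_sq_nonneg d (fun i => u i - l * v i)).
    simpl in H. rewrite dot_exp in H. rewrite (dot_sym d v u) in H.
    unfold A, B, C. nra. }
  assert (HB : 0 <= B) by apply rsum_sq_nonneg.
  destruct (Req_dec B 0) as [B0|Bp].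
  - destruct (Req_dec C 0) as [C0|Cn].
    + rewrite C0, B0. nra.
    + exfalso. specialize (Q ((A + 1) / (2 * C))). rewrite B0 in Q.
      assert (A - 2 * ((A + 1) / (2 * C)) * C + ((A + 1) / (2 * C)) ^ 2 * 0 = -1)
        by (field; auto). lra.
  - specialize (Q (C / B)).
    assert (A * B - C^2 = B * (A - 2 * (C / B) * C + (C / B) ^ 2 * B)) by (field; auto).
    nra.
Qed.

Lemma dot_bound d u v : on_sphere d u -> on_sphere d v -> -1 <= dot d u v <= 1.
Proof.
  unfold on_sphere; intros Hu Hv. assert (H := CS d u v). rewrite Hu, Hv in H. nra.
Qed.

Lemma acos_le p q : -1 <= p -> p <= q -> q <= 1 -> acos q <= acos p.
Proof.
  intros. destruct (Rle_lt_dec (acos q) (acos p)) as [h|h]; auto.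
  exfalso. pose proof (acos_bound p). pose proof (acos_bound q).
  pose proof (cos_decreasing_1 (acos p) (acos q) ltac:(lra) ltac:(lra) ltac:(lra) ltac:(lra) h).
  rewrite !cos_acos in H4 by lra. lra.
Qed.

Lemma tri d u v w : on_sphere d u -> on_sphere d v -> on_sphere d w ->
  acos (dot d u w) <= acos (dot d u v) + acos (dot d v w).
Proof.
  intros Hu Hv Hw.
  set (p := dot d u v); set (q := dot d v w); set (r := dot d u w).
  pose proof (dot_bound d u v Hu Hv) as Bp.
  pose proof (dot_bound d v w Hv Hw) as Bq.
  pose proof (dot_bound d u w Hu Hw) as Br.
  fold p in Bp; fold q in Bq; fold r in Br.
  pose proof (acos_bound p). pose proof (acos_bound q). pose proof (acos_bound r).
  destruct (Rle_lt_dec PI (acos p + acos q)) as [h|h]; [lra|].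
  assert (Hc : cos (acos p + acos q) = p * q - sqrt (1 - p²) * sqrt (1 - q²)).
  { rewrite cos_plus, !cos_acos, !sin_acos by lra. reflexivity. }
  assert (Hcs := CS d (fun i => u i - p * v i) (fun i => w i - q * v i)).
  unfold dot at 1 2 3 in Hcs. rewrite !dot_exp in Hcs.
  unfold on_sphere in Hu, Hv, Hw. rewrite (dot_sym d v u), (dot_sym d w v) in Hcs.
  fold p q r in Hcs. rewrite Hu, Hv, Hw in Hcs.
  assert (HS : sqrt (1 - p²) * sqrt (1 - q²) * (sqrt (1 - p²) * sqrt (1 - q²))
               = (1 - p²) * (1 - q²)).
  { rewrite <- sqrt_mult. apply sqrt_sqrt. all: unfold Rsqr; try nra. apply Rmult_le_pos; nra. }
  assert (0 <= sqrt (1 - p²) * sqrt (1 - q²)) by (apply Rmult_le_pos; apply sqrt_pos).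
  assert (r >= cos (acos p + acos q)).
  { rewrite Hc. revert HS H2. generalize (sqrt (1 - p²) * sqrt (1 - q²)). intros S HS HS0.
    assert ((r - p*q)^2 <= S * S) .
    { rewrite HS; unfold Rsqr.
      replace ((r - p*q)^2) with ((r - q * p - p * q + p * q * 1) ^ 2) by ring.
      replace ((1 - p * p) * (1 - q * q)) with ((1 - p * p - p * p + p * p * 1) * (1 - q * q - q * q + q * q * 1)) by ring.
      exact Hcs. }
    destruct (Rle_lt_dec (p*q - S) r) as [k|k]; [lra|].
    exfalso. set (z := p*q - r) in *. assert (z > S) by (unfold z; lra).
    assert (z * z > S * S) by (clearbody z; clear -H3 HS0; nra).
    replace ((r - p*q)^2) with (z*z) in H2 by (unfold z; ring). lra. }
  rewrite <- (acos_cos (acos p + acos q)) by lra.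
  pose proof (COS_bound (acos p + acos q)). apply acos_le; lra.
Qed.

Lemma quant_err d delta x i : (1 <= d)%nat -> 0 < delta ->
  (quant d delta x i - x i) * (quant d delta x i - x i) <= delta * delta / (4 * INR d).
Proof.
  intros Hd Hde.
  assert (Hn : 0 < INR d) by (apply lt_0_INR; lia).
  set (sd := sqrt (INR d)).
  assert (Hsd : 0 < sd) by (apply sqrt_lt_R0; auto).
  assert (Hss : sd * sd = INR d) by (apply sqrt_sqrt; lra).
  set (u := x i * sd / delta).
  set (F := rfloor (u + / 2)).
  assert (HF : u - /2 < F <= u + /2).
  { unfold F, rfloor. destruct (base_Int_part (u + /2)). lra. }
  assert (E : quant d delta x i - x i = (F - u) * (delta / sd)).
  { unfold quant. fold sd. fold u. fold F. unfold u. field. lra. }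
  rewrite E.
  replace ((F - u) * (delta / sd) * ((F - u) * (delta / sd)))
    with ((F - u) * (F - u) * (delta * delta / (sd * sd))) by (field; lra).
  rewrite Hss.
  assert ((F - u) * (F - u) <= / 4) by nra.
  assert (0 <= delta * delta / INR d) by (unfold Rdiv; apply Rmult_le_pos; [nra | left; apply Rinv_0_lt_compat; lra]).
  replace (delta * delta / (4 * INR d)) with (/4 * (delta * delta / INR d)) by (field; lra).
  nra.
Qed.

Lemma qlemma d delta x : (1 <= d)%nat -> 0 < delta <= 1 -> on_sphere d x ->
  on_sphere d (fq d delta x) /\ dot d x (fq d delta x) >= sqrt (1 - (delta/2)²).
Proof.
  intros Hd Hde Hx.
  assert (Hn : 0 < INR d) by (apply lt_0_INR; lia).
  set (q := quant d delta x).
  set (e := fun i => q i - x i).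
  set (E := dot d e e).
  set (s := dot d x e).
  assert (HE : E <= delta * delta / 4).
  { unfold E, dot. eapply Rle_trans.
    apply (rsum_le d _ (fun _ => delta * delta / (4 * INR d))).
    intros i _. unfold e, q. apply quant_err; [lia|lra].
    rewrite rsum_const. right. field. lra. }
  assert (HE0 : 0 <= E) by apply rsum_sq_nonneg.
  assert (Hs : s^2 <= E).
  { pose proof (CS d x e). unfold on_sphere in Hx. rewrite Hx in H. fold s E in H. lra. }
  destruct (dot_split d x q) as [S1 S2]. fold e in S1, S2. fold E s in S1, S2.
  unfold on_sphere in Hx. rewrite Hx in S1, S2.
  set (N := dot d q q) in *.
  assert (HN : 0 < N) by nra.
  assert (Hf : fq d delta x = fun i => q i / sqrt N) by reflexivity.
  assert (HsN : 0 < sqrt N) by (apply sqrt_lt_R0; auto).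
  assert (HsN2 : sqrt N * sqrt N = N) by (apply sqrt_sqrt; lra).
  rewrite Hf. split.
  - unfold on_sphere. rewrite dot_scal. fold N. rewrite <- Rinv_mult, HsN2. field. lra.
  - rewrite dot_scalr. fold q. rewrite S2.
    set (z := (1 + s) * / sqrt N).
    assert (Hz : 0 < z) by (unfold z; apply Rmult_lt_0_compat; [nra | apply Rinv_0_lt_compat; lra]).
    assert (Hz2 : z² = (1 + s) * (1 + s) / N).
    { unfold z, Rsqr. transitivity ((1 + s) * (1 + s) / (sqrt N * sqrt N)); [field; lra | rewrite HsN2; reflexivity]. }
    assert (1 - (delta / 2)² <= z²).
    { rewrite Hz2. unfold Rsqr. apply Rle_trans with (1 - E). lra.
      apply (Rmult_le_reg_r N); auto. unfold Rdiv. rewrite Rmult_assoc, Rinv_l by lra.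
      rewrite S1, Rmult_1_r. pose proof (Rle_0_sqr (s+E)) as HH. unfold Rsqr in HH. replace ((1+s)*(1+s)) with ((1-E)*(1+2*s+E) + (s+E)*(s+E)) by ring. lra. }
    apply Rle_ge. rewrite <- (sqrt_Rsqr z) by lra. apply sqrt_le_1_alt. auto.
Qed.

Lemma key_angle delta alpha' beta' :
  0 < delta <= 1 ->
  0 <= alpha' <= 1 -> 0 <= beta' <= 1 -> alpha' > beta' ->
  delta < (alpha' - beta') / (sqrt (2 - 2 * alpha') + sqrt (2 - 2 * beta')) ->
  0 <= asin (delta/2) /\ 4 * asin (delta / 2) < acos beta' - acos alpha'.
Proof.
  intros Hd Ha Hb Hab Hdel.
  pose proof PI_RGT_0 as HPI.
  assert (Hsa : sin (asin (delta/2)) = delta/2) by (apply sin_asin; lra).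
  pose proof (asin_bound (delta/2)) as Hab0.
  set (th := asin (delta/2)) in *.
  assert (Hth : 0 <= th).
  { destruct (Rle_lt_dec 0 th) as [k|k]; auto. exfalso.
    pose proof (sin_increasing_1 th 0 ltac:(lra) ltac:(lra) ltac:(lra) ltac:(lra) k).
    rewrite sin_0 in H. lra. }
  split; auto.
  assert (Hpa : acos alpha' <= PI/2) by (rewrite <- acos_0; apply acos_le; lra).
  assert (Hpb : acos beta' <= PI/2) by (rewrite <- acos_0; apply acos_le; lra).
  pose proof (acos_bound alpha'). pose proof (acos_bound beta').
  set (u := acos alpha' / 2). set (v := acos beta' / 2).
  assert (Hca : cos (2 * u) = alpha') by (unfold u; replace (2 * (acos alpha' / 2)) with (acos alpha') by field; apply cos_acos; lra).
  assert (Hcb : cos (2 * v) = beta') by (unfold v; replace (2 * (acos beta' / 2)) with (acos beta') by field; apply cos_acos; lra).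
  rewrite cos_2a_sin in Hca, Hcb.
  assert (Hsu : 0 <= sin u) by (apply sin_ge_0; unfold u; lra).
  assert (Hsv : 0 <= sin v) by (apply sin_ge_0; unfold v; lra).
  assert (Ea : sqrt (2 - 2 * alpha') = 2 * sin u).
  { rewrite <- Hca. transitivity (sqrt (Rsqr (2 * sin u))); [f_equal; unfold Rsqr; ring | apply sqrt_Rsqr; lra]. }
  assert (Eb : sqrt (2 - 2 * beta') = 2 * sin v).
  { rewrite <- Hcb. transitivity (sqrt (Rsqr (2 * sin v))); [f_equal; unfold Rsqr; ring | apply sqrt_Rsqr; lra]. }
  rewrite Ea, Eb in Hdel.
  assert (Hpos : 0 < sin u + sin v) by nra.
  assert (Hr : (alpha' - beta') / (2 * sin u + 2 * sin v) = sin v - sin u).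
  { rewrite <- Hca, <- Hcb. field. lra. }
  rewrite Hr, form4 in Hdel.
  assert (Hc0 : 0 <= cos ((v + u) / 2)) by (apply cos_ge_0; unfold u, v; lra).
  assert (Hc1 : cos ((v + u) / 2) <= 1) by (pose proof (COS_bound ((v+u)/2)); lra).
  assert (Hw : delta / 2 < sin ((v - u) / 2)).
  { assert (0 < sin ((v - u) / 2)) by nra. nra. }
  assert (th < (v - u) / 2).
  { destruct (Rle_lt_dec ((v - u) / 2) th) as [k|k]; auto. exfalso.
    destruct (Req_dec ((v - u) / 2) th) as [e|e].
    - rewrite e in Hw. lra.
    - pose proof (sin_increasing_1 ((v-u)/2) th ltac:(unfold u, v; lra) ltac:(unfold u, v; lra) ltac:(lra) ltac:(lra) ltac:(lra)). lra. }
  unfold u, v in H1. lra.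
Qed.

Theorem mainTheorem6 (d : nat) (delta alpha' beta' : R) :
  (1 <= d)%nat ->
  0 < delta <= 1 ->
  0 <= alpha' <= 1 -> 0 <= beta' <= 1 -> alpha' > beta' ->
  delta < (alpha' - beta') / (sqrt (2 - 2 * alpha') + sqrt (2 - 2 * beta')) ->
  exists t : R,
    forall x y : nat -> R, on_sphere d x -> on_sphere d y ->
      (dot d x y >= alpha' -> dot d (fq d delta x) (fq d delta y) >= t) /\
      (dot d x y <= beta' -> dot d (fq d delta x) (fq d delta y) < t).
Proof.
  intros Hd Hde Ha Hb Hab Hdel.
  destruct (key_angle delta alpha' beta' Hde Ha Hb Hab Hdel) as [Hth H4].
  assert (Hc : cos (asin (delta/2)) = sqrt (1 - (delta/2)²)) by (apply cos_asin; lra).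
  set (th := asin (delta/2)) in *.
  pose proof PI_RGT_0 as HPI.
  pose proof (acos_bound alpha'). pose proof (acos_bound beta').
  exists (cos (acos alpha' + 2 * th)).
  intros x y Hx Hy.
  destruct (qlemma d delta x Hd Hde Hx) as [Ha1 Ha2].
  destruct (qlemma d delta y Hd Hde Hy) as [Hb1 Hb2].
  set (a := fq d delta x) in *. set (b := fq d delta y) in *.
  rewrite <- Hc in Ha2, Hb2.
  assert (Tha : acos (dot d x a) <= th).
  { rewrite <- (acos_cos th) by lra. pose proof (dot_bound d x a Hx Ha1).
    pose proof (COS_bound th). apply acos_le; lra. }
  assert (Thb : acos (dot d y b) <= th).
  { rewrite <- (acos_cos th) by lra. pose proof (dot_bound d y b Hy Hb1).
    pose proof (COS_bound th). apply acos_le; lra. }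
  pose proof (dot_bound d a b Ha1 Hb1) as Bab.
  pose proof (dot_bound d x y Hx Hy) as Bxy.
  pose proof (acos_bound (dot d a b)) as Aab.
  split; intros Hxy.
  - pose proof (tri d a x b Ha1 Hx Hb1) as T1.
    pose proof (tri d x y b Hx Hy Hb1) as T2.
    rewrite (dot_sym d a x) in T1.
    assert (acos (dot d x y) <= acos alpha') by (apply acos_le; lra).
    rewrite <- (cos_acos (dot d a b)) by lra.
    destruct (Req_dec (acos (dot d a b)) (acos alpha' + 2 * th)) as [e|e].
    + rewrite e; lra.
    + left. apply cos_decreasing_1; lra.
  - pose proof (tri d x a y Hx Ha1 Hy) as T1.
    pose proof (tri d a b y Ha1 Hb1 Hy) as T2.
    rewrite (dot_sym d b y) in T2.
    assert (acos beta' <= acos (dot d x y)) by (apply acos_le; lra).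
    rewrite <- (cos_acos (dot d a b)) by lra.
    apply cos_decreasing_1; lra.
Qed.
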